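(* Let $n\le m$ and let $W\in\mathbb{R}^{n\times m}$ have full row rank $n$. Let $r\ge 1$ be an integer with $2r\le n$. Define the rank capacity of a parameterized adapter $f_\theta(W)$ by $$\mathcal{R}(f_\theta;W):=\max_{\theta}\operatorname{rank}(f_\theta(W))-\min_{\theta}\operatorname{rank}(f_\theta(W)).$$ Consider: (i) the rank-$r$ LoRA adapter $f_{\{A,B\}}(W)=W+AB^T$, where $A\in\mathbb{R}^{n\times r}$ and $B\in\mathbb{R}^{m\times r}$ range over all real matrices; (ii) the rank-$r$ additive spectral adapter: fix a singular value decomposition $W=USV^T$ with $U\in\mathbb{R}^{n\times n}$, $V\in\mathbb{R}^{m\times m}$ orthogonal and $S\in\mathbb{R}^{n\times m}$ rectangular diagonal with the singular values in nonincreasing order; write $U=[U_1\ U_2]$, $V=[V_1\ V_2]$ with $U_1\in\mathbb{R}^{n\times r}$, $V_1\in\mathbb{R}^{m\times r}$ the first $r$ columns; and set $f_{\{A_U,A_V\}}(W)=[U_1+A_U\ \ U_2]\,S\,[V_1+A_V\ \ V_2]^T$, where $A_U\in\mathbb{R}^{n\times r}$ and $A_V\in\mathbb{R}^{m\times r}$ range over all real matrices. Both adapters have $r(n+m)$ trainable parameters, and $$\mathcal{R}(\mathrm{LoRA};W)=r,\qquad \mathcal{R}(\mathrm{Spectral\ Adapter}^A;W)=2r.$$ *)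

(* Defs.v *)
From HB Require Import structures.
From mathcomp Require Import all_boot all_order all_algebra.
From mathcomp Require Import reals.
Set Implicit Arguments. Unset Strict Implicit. Unset Printing Implicit Defensive.
Import Order.TTheory GRing.Theory Num.Theory.
Local Open Scope ring_scope.

Definition rank_capacity (R : fieldType) (T : Type) (n m : nat)
  (f : T -> 'M[R]_(n, m)) (c : nat) : Prop :=
  exists t1 t2 : T,
    (forall t, (\rank (f t) <= \rank (f t1))%N) /\
    (forall t, (\rank (f t2) <= \rank (f t))%N) /\
    c = (\rank (f t1) - \rank (f t2))%N.

Definition is_svd (R : realType) (n m : nat) (W : 'M[R]_(n, m))
  (U : 'M[R]_n) (S : 'M[R]_(n, m)) (V : 'M[R]_m) : Prop :=
  [/\ U *m U^T = 1%:M /\ U^T *m U = 1%:M,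
      V *m V^T = 1%:M /\ V^T *m V = 1%:M,
      (forall (i : 'I_n) (j : 'I_m), (i : nat) <> j -> S i j = 0),
      (forall (i : 'I_n) (j : 'I_m), (i : nat) = j -> 0 <= S i j) /\
      (forall (i i' : 'I_n) (j j' : 'I_m), (i : nat) = j -> (i' : nat) = j' ->
          (i <= i')%N -> S i' j' <= S i j)
    & W = U *m S *m V^T].

(* Zero-padding of an n x r matrix A to the n x k matrix [A 0]
   (first r columns are A, the remaining ones are 0), for r <= k. *)
Definition padc (R : fieldType) (n r k : nat) (A : 'M[R]_(n, r)) : 'M[R]_(n, k) :=
  A *m pid_mx r.

Definition lora (R : fieldType) (n m r : nat) (W : 'M[R]_(n, m))
  (theta : 'M[R]_(n, r) * 'M[R]_(m, r)) : 'M[R]_(n, m) :=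
  W + theta.1 *m theta.2^T.

(* Additive spectral adapter: theta = (A_U, A_V),
   f(W) = [U1 + A_U, U2] S [V1 + A_V, V2]^T
        = (U + [A_U 0]) S (V + [A_V 0])^T. *)
Definition spectral (R : fieldType) (n m r : nat) (U : 'M[R]_n)
  (S : 'M[R]_(n, m)) (V : 'M[R]_m)
  (theta : 'M[R]_(n, r) * 'M[R]_(m, r)) : 'M[R]_(n, m) :=
  (U + padc n theta.1) *m S *m (V + padc m theta.2)^T.

Arguments padc {R n r} k A.
Arguments lora {R n m} r W theta.
Arguments spectral {R n m} r U S V theta.
Arguments rank_capacity {R T n m} f c.
Arguments is_svd {R n m} W U S V.

(* Main.v *)
Require Import Defs.
From HB Require Import structures.
From mathcomp Require Import all_boot all_order all_algebra.
From mathcomp Require Import reals.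
From mathcomp Require Import zify.
Import Order.TTheory GRing.Theory Num.Theory.
Local Open Scope ring_scope.

Lemma cap_gen (F : fieldType) (T : Type) (n m : nat) (f : T -> 'M[F]_(n, m))
  (N c : nat) (t1 t2 : T) :
  (c <= N)%N -> \rank (f t1) = N -> (forall t, (\rank (f t) <= N)%N) ->
  (forall t, (N <= \rank (f t) + c)%N) -> (\rank (f t2) <= N - c)%N ->
  rank_capacity f c.
Proof.
move=> cN h1 hup hlo h2; exists t1, t2; split; [|split].
- by move=> t; rewrite h1 hup.
- move=> t; apply: leq_trans h2 _; have := hlo t; lia.
- rewrite h1; have := hlo t2; lia.
Qed.

Lemma rank_addle (F : fieldType) (n m : nat) (A B : 'M[F]_(n, m)) :
  (\rank A <= \rank (A + B)%R + \rank B)%N.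
Proof.
have e : A = (A + B) + - B by rewrite addrK.
rewrite {1}e.
by apply: leq_trans (mxrank_add _ _) _; rewrite mxrank_opp.
Qed.
Arguments rank_addle {F n m}.

Lemma rank_padc (F : fieldType) (n r k : nat) (A : 'M[F]_(n, r)) :
  (\rank (padc k A) <= r)%N.
Proof. by apply: leq_trans (mxrankM_maxl _ _) _; exact: rank_leq_col. Qed.

Lemma spec_lower (F : fieldType) n m r (U : 'M[F]_n) (S : 'M[F]_(n, m)) (V : 'M[F]_m)
  (A : 'M[F]_(n, r)) (B : 'M[F]_(m, r)) :
  (\rank (U *m S *m V^T) <= \rank (spectral r U S V (A, B)) + (r + r))%N.
Proof.
set P := padc n A; set Q := padc m B.
have e : spectral r U S V (A, B) = U *m S *m V^T + (P *m S *m (V + Q)^T + U *m S *m Q^T).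
  rewrite /spectral /= -/P -/Q raddfD !(mulmxDl, mulmxDr).
  by rewrite -!addrA; congr (_ + (_ + _)); rewrite addrC.
rewrite e; apply: (leq_trans (rank_addle _ (P *m S *m (V + Q)^T + U *m S *m Q^T))); rewrite leq_add2l.
apply: leq_trans (mxrank_add _ _) _; apply: leq_add.
  by apply: leq_trans (mxrankM_maxl _ _) _; apply: leq_trans (mxrankM_maxl _ _) _; exact: rank_padc.
by apply: leq_trans (mxrankM_maxr _ _) _; rewrite mxrank_tr; exact: rank_padc.
Qed.

Lemma lora_cap (R : realType) (n m r : nat) (W : 'M[R]_(n, m)) :
  \rank W = n -> (r <= n)%N -> rank_capacity (lora r W) r.
Proof.
move=> HW Hr.
apply: (@cap_gen _ _ _ _ (lora r W) n r (0, 0) (- pid_mx r, W^T *m pid_mx r)) => //.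
- by rewrite /lora /= mul0mx addr0.
- by move=> t; apply: rank_leq_row.
- move=> [A B]; rewrite /lora /=.
  rewrite -{1}HW; apply: (leq_trans (rank_addle W (A *m B^T))).
  rewrite leq_add2l; apply: leq_trans (mxrankM_maxl _ _) _.
  exact: rank_leq_col.
- rewrite /lora /= trmx_mul trmxK tr_pid_mx mulNmx mulmxA mul_pid_mx !minnn.
  rewrite -{1}(mul1mx W) -mulmxBl.
  apply: leq_trans (mxrankM_maxl _ _) _.
  by rewrite -/(copid_mx r) rank_copid_mx.
Qed.

Lemma Sdiag_sum (F : fieldType) n m (S : 'M[F]_(n.+1, m.+1)) (Hnm : (n <= m)%N)
  (Hd : forall (i : 'I_n.+1) (j : 'I_m.+1), (i : nat) <> j -> S i j = 0)
  (l : 'I_n.+1) (G : 'I_m.+1 -> F) :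
  \sum_j S l j * G j = S l (inord l) * G (inord l).
Proof.
have hl : (l < m.+1)%N by have := ltn_ord l; lia.
rewrite (bigD1 (inord l)) //= big1 ?addr0 // => j hj.
rewrite Hd ?mul0r // => e; move/eqP: hj; apply; apply: val_inj.
by rewrite /= inordK // -e.
Qed.

Lemma mul_pid_col (F : fieldType) p q r (A : 'M[F]_(p, q)) :
  (forall i (j : 'I_q), (r <= j)%N -> A i j = 0) -> A *m pid_mx r = A.
Proof.
move=> h; apply/matrixP => i j; rewrite !mxE (bigD1 j) //= big1 ?addr0.
- rewrite mxE eqxx /=; case: ltnP => hj; first by rewrite mulr1.
  by rewrite mulr0 h.
- move=> k hk; rewrite mxE.
  have /negbTE -> : (k : nat) != j by [].
  by rewrite mulr0.
Qed.
Lemma XSY (F : fieldType) n m r (S : 'M[F]_(n.+1, m.+1)) (Hnm : (n <= m)%N)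
  (Hr : (2 * r <= n.+1)%N) (Hr1 : (1 <= r)%N)
  (Hd : forall (i : 'I_n.+1) (j : 'I_m.+1), (i : nat) <> j -> S i j = 0)
  (Hnz : forall j, (j < r)%N -> S (inord j) (inord j) != 0) :
  let s := fun j : nat => S (inord j) (inord j) in
  let X : 'M[F]_n.+1 := \matrix_(i < n.+1, j < n.+1) (if (j < r)%N then
       (if (i == (j + r)%N :> nat) then - s (j + r)%N / s j else 0) else (i == j :> nat)%:R) in
  let Y : 'M[F]_m.+1 := \matrix_(k < m.+1, j < m.+1) (if (j < r)%N then
       (k == (j + r)%N :> nat)%:R else (k == j :> nat)%:R) in
  X *m S *m Y^T = copid_mx (2 * r) *m S.
Proof.
move=> s X Y.
have sE : forall (l : 'I_n.+1), S l (inord l) = s l.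
  by move=> l; rewrite /s inord_val.
apply/matrixP => i k.
have L : (X *m S *m Y^T) i k = \sum_l X i l * (s l *
     (if (l < r)%N then (k == (l + r)%N :> nat)%:R else (k == l :> nat)%:R)).
  rewrite mxE.
  under eq_bigr => j _ do rewrite !mxE big_distrl /=.
  rewrite exchange_big /=; apply: eq_bigr => l _.
  under eq_bigr => j _ do rewrite -mulrA.
  rewrite -mulr_sumr Sdiag_sum // sE; congr (_ * (_ * _)).
  have hl : (l < m.+1)%N by have := ltn_ord l; lia.
  by rewrite !inordK.
have R' : (copid_mx (2 * r) *m S) i k = if (2 * r <= i)%N then S i k else 0.
  rewrite mxE (bigD1 i) //= big1 ?addr0.
    rewrite /copid_mx !mxE eqxx /=; case: ltnP => h.
      by rewrite eqxx /= subrr mul0r.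
    by rewrite eqxx /= subr0 mul1r.
  move=> j hj; rewrite /copid_mx !mxE.
  have /negbTE -> : (i : nat) != j by rewrite eq_sym.
  by rewrite eq_sym (negbTE hj) /= subr0 mul0r.
have Sik : S i k = if (i == k :> nat) then s i else 0.
  case: eqP => e; last exact: Hd.
  rewrite /s; congr (S _ _); first by rewrite inord_val.
  have hi : (i < m.+1)%N by have := ltn_ord i; lia.
  by apply: val_inj; rewrite /= inordK.
pose a (l : nat) := if [&& (l < r)%N, (i == (l + r)%N :> nat) & (k == (l + r)%N :> nat)]
  then - s (l + r)%N / s l * s l else 0.
pose b (l : nat) := if [&& (r <= l)%N, (i == l :> nat) & (k == l :> nat)] then s l else 0.
have E : forall l : 'I_n.+1,
  X i l * (s l * (if (l < r)%N then (k == (l + r)%N :> nat)%:R else (k == l :> nat)%:R))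
  = a l + b l.
  move=> l; rewrite /X mxE /a /b; case: ltnP => hl /=.
    case: (i == (l + r)%N :> nat); case: (k == (l + r)%N :> nat) => /=;
      by rewrite ?(mulr1, mulr0, mul0r, addr0).
  case: (i == l :> nat); case: (k == l :> nat) => /=;
    by rewrite ?(mulr1, mulr0, mul0r, addr0, add0r, mul1r).
rewrite L R' (eq_bigr _ (fun l _ => E l)) big_split /=.
have Sb : \sum_(l < n.+1) b l = b i.
  rewrite (bigD1 i) //= big1 ?addr0 // => l hl; rewrite /b.
  have /negbTE -> : (i : nat) != l by rewrite eq_sym.
  by rewrite andbF.
rewrite Sb.
case: (ltnP i r) => hir.
  have Sa : \sum_(l < n.+1) a l = 0.
    apply: big1 => l _; rewrite /a.
    have /negbTE -> : (i : nat) != (l + r)%N by apply/eqP; lia.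
    by rewrite andbF.
  rewrite Sa add0r /b.
  have -> : (r <= i)%N = false by apply/negbTE; rewrite -ltnNge.
  have -> : (2 * r <= i)%N = false by apply/negbTE; rewrite -ltnNge; lia.
  done.
pose l0 : 'I_n.+1 := inord (i - r).
have hl0 : (l0 : nat) = (i - r)%N by rewrite inordK //; have := ltn_ord i; lia.
have Sa : \sum_(l < n.+1) a l = a l0.
  rewrite (bigD1 l0) //= big1 ?addr0 // => l hl; rewrite /a.
  have /negbTE -> : (i : nat) != (l + r)%N.
    apply/eqP => e; move/eqP: hl; apply; apply: val_inj; rewrite /= hl0; lia.
  by rewrite andbF.
rewrite Sa /a /b hl0 (_ : (i - r + r = i)%N); last by lia.
rewrite Sik eqxx hir /= [(k == i :> nat)]eq_sym.
case: (ltnP i (2 * r)) => h2.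
  have -> : (i - r < r)%N by lia.
  case: (i == k :> nat) => /=; last by rewrite addr0.
  rewrite divfK ?addNr //; apply: Hnz; lia.
have -> : (i - r < r)%N = false by apply/negbTE; lia.
by rewrite add0r.
Qed.



Arguments mul_pid_col {F p q r A}.
Arguments XSY {F n m r S}.

Lemma spec_wit (F : fieldType) n m r (U : 'M[F]_n.+1) (S : 'M[F]_(n.+1, m.+1))
  (V : 'M[F]_m.+1) (Hnm : (n <= m)%N)
  (Hr : (2 * r <= n.+1)%N) (Hr1 : (1 <= r)%N)
  (Hd : forall (i : 'I_n.+1) (j : 'I_m.+1), (i : nat) <> j -> S i j = 0)
  (Hnz : forall j, (j < r)%N -> S (inord j) (inord j) != 0) :
  exists t, (\rank (spectral r U S V t) <= n.+1 - 2 * r)%N.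
Proof.
pose s := fun j : nat => S (inord j) (inord j).
pose X : 'M[F]_n.+1 := \matrix_(i < n.+1, j < n.+1) (if (j < r)%N then
       (if (i == (j + r)%N :> nat) then - s (j + r)%N / s j else 0) else (i == j :> nat)%:R).
pose Y : 'M[F]_m.+1 := \matrix_(k < m.+1, j < m.+1) (if (j < r)%N then
       (k == (j + r)%N :> nat)%:R else (k == j :> nat)%:R).
have H : X *m S *m Y^T = copid_mx (2 * r) *m S := XSY Hnm Hr Hr1 Hd Hnz.
have cX : forall i (j : 'I_n.+1), (r <= j)%N -> (X - 1%:M) i j = 0.
  move=> i j hj; rewrite !mxE ltnNge hj /=; exact: subrr.
have cY : forall i (j : 'I_m.+1), (r <= j)%N -> (Y - 1%:M) i j = 0.
  move=> i j hj; rewrite !mxE ltnNge hj /=; exact: subrr.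
exists (U *m (X - 1%:M) *m (pid_mx r : 'M_(n.+1, r)), V *m (Y - 1%:M) *m (pid_mx r : 'M_(m.+1, r))).
have hU : U + padc n.+1 (U *m (X - 1%:M) *m (pid_mx r : 'M_(n.+1, r))) = U *m X.
  rewrite /padc -mulmxA mul_pid_mx !minnn.
  by rewrite -mulmxA (mul_pid_col cX) mulmxBr mulmx1 addrC subrK.
have hV : V + padc m.+1 (V *m (Y - 1%:M) *m (pid_mx r : 'M_(m.+1, r))) = V *m Y.
  rewrite /padc -mulmxA mul_pid_mx !minnn.
  by rewrite -mulmxA (mul_pid_col cY) mulmxBr mulmx1 addrC subrK.
rewrite /spectral /= hU hV trmx_mul !mulmxA -(mulmxA U X) -(mulmxA U) H.
apply: leq_trans (mxrankM_maxl _ _) _.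
apply: leq_trans (mxrankM_maxr _ _) _.
apply: leq_trans (mxrankM_maxl _ _) _.
by rewrite rank_copid_mx.
Qed.

Lemma svd_nz (R : realType) n m (W : 'M[R]_(n.+1, m.+1)) (U : 'M[R]_n.+1)
  (S : 'M[R]_(n.+1, m.+1)) (V : 'M[R]_m.+1) (Hnm : (n <= m)%N) (HW : \rank W = n.+1)
  (Hd : forall (i : 'I_n.+1) (j : 'I_m.+1), (i : nat) <> j -> S i j = 0)
  (Hnn : forall (i : 'I_n.+1) (j : 'I_m.+1), (i : nat) = j -> 0 <= S i j)
  (Hmono : forall (i i' : 'I_n.+1) (j j' : 'I_m.+1), (i : nat) = j -> (i' : nat) = j' ->
          (i <= i')%N -> S i' j' <= S i j)
  (HWe : W = U *m S *m V^T) :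
  forall j, (j < n.+1)%N -> S (inord j) (inord j) != 0.
Proof.
move=> j hj; apply/negP => /eqP h0.
have hjm : (j < m.+1)%N by lia.
have hnm : (n < m.+1)%N by lia.
have hn : S (inord n) (inord n) = 0.
  apply/eqP; rewrite eq_le; apply/andP; split.
    rewrite -h0; apply: Hmono; rewrite ?inordK //; lia.
  by apply: Hnn; rewrite !inordK.
have hS : S = pid_mx n *m S.
  apply/matrixP => i k; rewrite mxE (bigD1 i) //= big1 ?addr0.
    rewrite mxE eqxx /=; case: (ltnP i n) => hi; first by rewrite mul1r.
    rewrite mul0r; case: (eqVneq (i : nat) k) => e; last by apply: Hd; apply/eqP.
    have hi' : (i : nat) = n by have := ltn_ord i; lia.
    rewrite -hn; congr (S _ _); apply: val_inj; rewrite /= inordK //; lia.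
  move=> l hl; rewrite mxE.
  have /negbTE -> : (i : nat) != l by rewrite eq_sym.
  by rewrite mul0r.
have : (\rank W <= n)%N.
  rewrite HWe; apply: leq_trans (mxrankM_maxl _ _) _.
  apply: leq_trans (mxrankM_maxr _ _) _.
  rewrite hS; apply: leq_trans (mxrankM_maxl _ _) _.
  by rewrite rank_pid_mx.
by rewrite HW ltnn.
Qed.

Theorem lemma3p1 (R : realType) (n m r : nat) (W : 'M[R]_(n, m))
  (U : 'M[R]_n) (S : 'M[R]_(n, m)) (V : 'M[R]_m) :
  (n <= m)%N -> \rank W = n -> (1 <= r)%N -> (2 * r <= n)%N ->
  is_svd W U S V ->
  rank_capacity (lora r W) r /\ rank_capacity (spectral r U S V) (2 * r).
Proof.
move=> Hnm HW Hr1 Hr Hsvd.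
have Hrn : (r <= n)%N by lia.
split; first exact: lora_cap.
case: Hsvd => _ _ Hd [Hnn Hmono] HWe.
have [t2 ht2] : exists t, (\rank (spectral r U S V t) <= n - 2 * r)%N.
  case: n W U S V Hnm HW Hr Hrn Hd Hnn Hmono HWe =>
    [|n] W U S V Hnm HW Hr Hrn Hd Hnn Hmono HWe; first by lia.
  case: m W S V Hnm HW Hd Hnn Hmono HWe =>
    [|m] W S V Hnm HW Hd Hnn Hmono HWe; first by lia.
  apply: (@spec_wit _ n m r U S V Hnm Hr Hr1 Hd) => j hj; apply: (@svd_nz _ n m W U S V Hnm HW Hd Hnn Hmono HWe); lia.
apply: (@cap_gen _ _ _ _ (spectral r U S V) n (2 * r) (0, 0) t2) => //.
- rewrite /spectral /padc /= !mul0mx !addr0 -HWe //.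
- by move=> t; apply: rank_leq_row.
- move=> [A B]; rewrite -{1}HW HWe (_ : (2 * r = r + r)%N); last by lia.
  exact: spec_lower.
Qed.
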